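(* Let $n\ge2$, $l\in\{1,\dots,n-1\}$, $p$ a strictly positive distribution on $\{0,1\}^n$, and let the Fisher information matrix of the $l$-mixed coordinates at $p$ be $G_\zeta=\begin{pmatrix}A&0\\0&B\end{pmatrix}$ with $A=((G_\eta^{-1})_{I_\eta})^{-1}$ and $B=((G_\theta^{-1})_{J_\theta})^{-1}$. Then the diagonal elements of $A$ are lower bounded by one, and the diagonal elements of $B$ are upper bounded by one.
   Context: $X_I(x)=\prod_{i\in I}x_i$; $\eta_I=E_p[X_I]$; $\theta^I$ defined by $\log p(x)=\sum_{I\ne\emptyset}\theta^IX_I(x)-\psi(\theta)$. $I_\eta=\{I:1\le|I|\le l\}$, $J_\theta=\{I:|I|>l\}$; the $l$-mixed coordinates are $((\eta_I)_{I\in I_\eta},(\theta^I)_{I\in J_\theta})$. $G_\eta,G_\theta$ are the Fisher information matrices of the $\eta$- and $\theta$-coordinates at $p$ (so $G_\theta$ has entries $\eta_{I\cup J}-\eta_I\eta_J$), and $M_{\mathcal I}$ denotes the principal submatrix of $M$ indexed by $\mathcal I$. *)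

(* Defs.v *)
From HB Require Import structures.
From mathcomp Require Import all_boot all_order all_algebra.
Unset Printing Implicit Defensive.
Import Order.TTheory GRing.Theory Num.Theory.
Local Open Scope ring_scope.

Section Defs.
Variables (R : realFieldType) (n : nat).

Definition state := {ffun 'I_n -> bool}.

Definition Xmon (I : {set 'I_n}) (x : state) : R :=
  \prod_(i in I) (nat_of_bool (x i))%:R.

Definition eta (p : state -> R) (I : {set 'I_n}) : R :=
  \sum_(x : state) p x * Xmon I x.

Definition NE : {set {set 'I_n}} := [set I : {set 'I_n} | I != set0].

Definition N := #|NE|.

Definition idx (k : 'I_N) : {set 'I_n} := @enum_val _ (mem NE) k.

(* Fisher information of theta-coordinates: entries eta_{I u J} - eta_I eta_J *)
Definition Gtheta (p : state -> R) : 'M[R]_N :=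
  \matrix_(i, j) (eta p (idx i :|: idx j) - eta p (idx i) * eta p (idx j)).

Definition Geta (p : state -> R) : 'M[R]_N := invmx (Gtheta p).

Definition Ieta (l : nat) : {set 'I_N} := [set k : 'I_N | #|idx k| <= l]%N.
Definition Jtheta (l : nat) : {set 'I_N} := [set k : 'I_N | l < #|idx k|]%N.

Definition principal (M : 'M[R]_N) (S : {set 'I_N}) : 'M[R]_#|S| :=
  mxsub (@enum_val _ (mem S)) (@enum_val _ (mem S)) M.

Definition Amat (p : state -> R) (l : nat) : 'M[R]_#|Ieta l| :=
  invmx (principal (invmx (Geta p)) (Ieta l)).
Definition Bmat (p : state -> R) (l : nat) : 'M[R]_#|Jtheta l| :=
  invmx (principal (invmx (Gtheta p)) (Jtheta l)).

End Defs.

(* Main.v *)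
Require Import Defs.
From HB Require Import structures.
From mathcomp Require Import all_boot all_order all_algebra.
From mathcomp Require Import ring lra.
Import Order.TTheory GRing.Theory Num.Theory.
Local Open Scope ring_scope.
Set Implicit Arguments.
Section Gen.
Variable R : realFieldType.

Definition qf m (M : 'M[R]_m) (u : 'rV[R]_m) : R := (u *m M *m u^T) 0 0.
Definition bf m (M : 'M[R]_m) (u v : 'rV[R]_m) : R := (u *m M *m v^T) 0 0.

Lemma e00D (A B : 'M[R]_1) : (A + B) 0 0 = A 0 0 + B 0 0.
Proof. by rewrite mxE. Qed.
Lemma e00N (A : 'M[R]_1) : (- A) 0 0 = - A 0 0.
Proof. by rewrite mxE. Qed.

Lemma bfC m (M : 'M[R]_m) u v : M^T = M -> bf M v u = bf M u v.
Proof.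
move=> HM; rewrite /bf.
have -> : v *m M *m u^T = (u *m M *m v^T)^T by rewrite !trmx_mul trmxK HM mulmxA.
by rewrite mxE.
Qed.

Lemma key_ineq m (M : 'M[R]_m) u v : M^T = M -> (forall w, 0 <= qf M w) ->
  2 * bf M u v <= qf M u + qf M v.
Proof.
move=> HM Hpos; have := Hpos (u - v).
have -> : qf M (u - v) = qf M u - bf M u v - bf M v u + qf M v.
  rewrite /qf /bf linearB /= mulmxBl !mulmxBr.
  rewrite !mulmxBl !e00D !e00N !e00D !e00N. ring.
rewrite bfC //; lra.
Qed.

Lemma qf_delta m (M : 'M[R]_m) i : qf M (delta_mx 0 i) = M i i.
Proof. by rewrite /qf trmx_delta -rowE -colE !mxE. Qed.

Definition posdef m (M : 'M[R]_m) := forall u, u != 0 -> 0 < qf M u.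

Lemma posdef_psd m (M : 'M[R]_m) : posdef M -> forall w, 0 <= qf M w.
Proof.
move=> H w; have [->|nz] := eqVneq w 0; last exact/ltW/H.
by rewrite /qf !mul0mx mxE.
Qed.

Lemma posdef_unit m (M : 'M[R]_m) : posdef M -> M \in unitmx.
Proof.
move=> H; rewrite unitmxE unitfE; apply/negP => /det0P [v nz vM0].
by have := H v nz; rewrite /qf vM0 mul0mx mxE ltxx.
Qed.

Definition Psel k m (g : 'I_k -> 'I_m) : 'M[R]_(k, m) := rowsub g 1%:M.

Lemma Psel_tr k m (g : 'I_k -> 'I_m) : (Psel g)^T = colsub g 1%:M.
Proof. by apply/matrixP => a b; rewrite !mxE eq_sym. Qed.

Lemma mxsub_sel k m (g : 'I_k -> 'I_m) (M : 'M[R]_m) :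
  mxsub g g M = Psel g *m M *m (Psel g)^T.
Proof.
rewrite Psel_tr /Psel mul_rowsub_mx mul1mx mulmx_colsub mulmx1.
by apply/matrixP => a b; rewrite !mxE.
Qed.

Lemma Psel_PT k m (g : 'I_k -> 'I_m) : injective g ->
  Psel g *m (Psel g)^T = 1%:M.
Proof.
move=> gi; have := mxsub_sel g 1%:M; rewrite mulmx1 => <-.
by apply/matrixP => a b; rewrite !mxE (inj_eq gi).
Qed.

Lemma posdef_sub k m (g : 'I_k -> 'I_m) (M : 'M[R]_m) : injective g ->
  posdef M -> posdef (mxsub g g M).
Proof.
move=> gi H u nz; rewrite mxsub_sel.
have -> : qf (Psel g *m M *m (Psel g)^T) u = qf M (u *m Psel g).
  by rewrite /qf trmx_mul !mulmxA.
apply: H; apply: contra nz => /eqP h.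
by rewrite -(mulmx1 u) -(Psel_PT gi) mulmxA h mul0mx.
Qed.

Lemma posdef_inv m (M : 'M[R]_m) : M^T = M -> posdef M -> posdef (invmx M).
Proof.
move=> HM H u nz; have U := posdef_unit H.
have -> : qf (invmx M) u = qf M (u *m invmx M).
  rewrite /qf trmx_mul trmx_inv HM !mulmxA -(mulmxA _ M) mulmxV // mulmx1 //.
apply: H; apply: contra nz => /eqP h.
by rewrite -(mulmx1 u) -(mulVmx U) mulmxA h mul0mx.
Qed.

Lemma caseA m (M : 'M[R]_m) i : M^T = M -> posdef M ->
  2 - M i i <= invmx M i i.
Proof.
move=> HM H; have U := posdef_unit H.
set e := delta_mx 0 i : 'rV[R]_m.
have := key_ineq e (e *m invmx M) HM (posdef_psd H).
have -> : bf M e (e *m invmx M) = 1.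
  rewrite /bf trmx_mul trmx_inv HM !mulmxA -(mulmxA _ M) mulmxV // mulmx1.
  have := qf_delta (1%:M : 'M[R]_m) i; rewrite /qf mulmx1 => ->.
  by rewrite mxE eqxx.
have -> : qf M (e *m invmx M) = invmx M i i.
  rewrite /qf trmx_mul trmx_inv HM !mulmxA -(mulmxA _ (invmx M) M) mulVmx // mulmx1.
  by rewrite -(qf_delta (invmx M) i).
rewrite qf_delta; lra.
Qed.

Lemma caseB m k (S : 'M[R]_m) (g : 'I_k -> 'I_m) j : injective g -> S^T = S -> posdef S ->
  invmx (mxsub g g (invmx S)) j j <= S (g j) (g j).
Proof.
move=> gi HS H; have U := posdef_unit H.
have HN : (invmx S)^T = invmx S by rewrite trmx_inv HS.
set N := invmx S in HN *.
set K := mxsub g g N.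
have HK : K^T = K by rewrite /K mxsub_sel !trmx_mul trmxK HN mulmxA.
have UK : K \in unitmx by apply/posdef_unit/posdef_sub/posdef_inv.
set B := invmx K.
have HB : B^T = B by rewrite /B trmx_inv HK.
set P := Psel g.
set e := delta_mx 0 j : 'rV[R]_k.
have := key_ineq (e *m B *m P *m N) (e *m P) HS (posdef_psd H).
have -> : qf S (e *m P) = S (g j) (g j).
  have <- : mxsub g g S j j = S (g j) (g j) by rewrite mxE.
  by rewrite -qf_delta mxsub_sel /qf trmx_mul !mulmxA.
have -> : bf S (e *m B *m P *m N) (e *m P) = B j j.
  rewrite /bf trmx_mul -!mulmxA (mulmxA N S) mulVmx // mul1mx.
  by rewrite !mulmxA -(mulmxA _ P) Psel_PT // mulmx1 -(qf_delta B j) /qf.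
have -> : qf S (e *m B *m P *m N) = B j j.
  rewrite /qf !trmx_mul HN HB -!mulmxA (mulmxA N S) mulVmx // mul1mx.
  have -> : P *m (N *m (P^T *m (B *m e^T))) = K *m (B *m e^T).
    by rewrite /K mxsub_sel !mulmxA.
  by rewrite (mulmxA K) /B mulmxV // mul1mx -(qf_delta B j) /qf mulmxA.
lra.
Qed.
End Gen.
Section Spec.
Variables (R : realFieldType) (n : nat) (p : state n -> R).
Hypothesis ppos : forall x, 0 < p x.
Hypothesis psum : \sum_(x : state n) p x = 1.

Lemma Xmon_sub I x : Xmon R n I x = ((I \subset [set i | x i]) : nat)%:R.
Proof.
rewrite /Xmon; case: (boolP (I \subset _)) => h.
  by rewrite big1 // => i Hi; move/subsetP: h => /(_ i Hi); rewrite inE => ->.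
case/subsetPn: h => i Hi; rewrite inE => /negbTE Hx.
by rewrite (bigD1 i) //= Hx mul0r.
Qed.

Lemma XmonU I J x : Xmon R n (I :|: J) x = Xmon R n I x * Xmon R n J x.
Proof. by rewrite !Xmon_sub subUset -natrM mulnb. Qed.

Definition F (x : state n) (a : 'I_(N n)) : R := Xmon R n (@idx n a) x - Defs.eta R n p (@idx n a).

Lemma Gentry a b : Defs.eta R n p (@idx n a :|: @idx n b) - Defs.eta R n p (@idx n a) * Defs.eta R n p (@idx n b) =
  \sum_x p x * (F x a * F x b).
Proof.
have E x : p x * (F x a * F x b) = p x * Xmon R n (@idx n a :|: @idx n b) x
   - (Defs.eta R n p (@idx n b) * (p x * Xmon R n (@idx n a) x) + Defs.eta R n p (@idx n a) * (p x * Xmon R n (@idx n b) x))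
   + Defs.eta R n p (@idx n a) * Defs.eta R n p (@idx n b) * p x.
  by rewrite XmonU /F; ring.
rewrite (eq_bigr _ (fun x _ => E x)) big_split /= sumrB big_split /= -!mulr_sumr psum.
rewrite /Defs.eta; ring.
Qed.

Lemma Gsym : (Gtheta R n p)^T = Gtheta R n p.
Proof. by apply/matrixP => a b; rewrite !mxE setUC mulrC. Qed.

Lemma Gdiag a : Gtheta R n p a a <= 1.
Proof. rewrite mxE setUid; nra. Qed.

Lemma Gquad (u : 'rV[R]_(N n)) :
  (u *m Gtheta R n p *m u^T) 0 0 = \sum_x p x * (\sum_a u 0 a * F x a) ^+ 2.
Proof.
rewrite !mxE.
under eq_bigr => b _ do rewrite !mxE big_distrl /=.
under eq_bigr => b _ do under eq_bigr => a _ do rewrite !mxE Gentry big_distrr big_distrl /=.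
under eq_bigr => j _ do rewrite exchange_big /=.
rewrite exchange_big /=.
under [RHS]eq_bigr => x _ do rewrite expr2 big_distrl big_distrr /=.
apply: eq_bigr => x _; apply: eq_bigr => a _.
rewrite big_distrr big_distrr /=.
apply: eq_bigr => b _; ring.
Qed.

Lemma indep (u : 'rV[R]_(N n)) : (forall x, \sum_a u 0 a * F x a = 0) -> u = 0.
Proof.
move=> H.
set c := \sum_a u 0 a * Defs.eta R n p (idx n a).
have HY x : \sum_a u 0 a * Xmon R n (idx n a) x = c.
  have := H x; rewrite /F.
  under eq_bigr do rewrite mulrBr.
  by rewrite sumrB => /eqP; rewrite subr_eq0 => /eqP.
have Xne a : Xmon R n (idx n a) [ffun=> false] = 0.
  rewrite Xmon_sub.
  suff -> : (idx n a \subset [set i | [ffun=> false] i]) = false by [].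
  apply/negP => /subsetP hs.
  have /set0Pn [i Hi] : idx n a != set0 by have := enum_valP a; rewrite inE.
  by have := hs i Hi; rewrite inE ffunE.
have c0 : c = 0 by rewrite -(HY [ffun=> false]) big1 // => a _; rewrite Xne mulr0.
have main k : forall a, (#|idx n a| < k)%N -> u 0 a = 0.
  elim: k => [//|k IH] a Ha.
  set xa : state n := [ffun i => i \in idx n a].
  have Hs b : Xmon R n (idx n b) xa = ((idx n b \subset idx n a) : nat)%:R.
    rewrite Xmon_sub.
    suff -> : [set i | xa i] = idx n a by [].
    by apply/setP => i; rewrite inE ffunE.
  have := HY xa; rewrite c0 (bigD1 a) //= big1 ?addr0.
    by rewrite Hs subxx mulr1.
  move=> b hb; rewrite Hs; case: (boolP (idx n b \subset idx n a)) => hsub; last by rewrite mulr0.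
  have : idx n b \proper idx n a.
    rewrite properEneq hsub andbT; apply: contra hb => /eqP h.
    by apply/eqP; apply: enum_val_inj.
  move/proper_card => hc; rewrite IH ?mul0r //.
  exact: leq_trans hc Ha.
by apply/rowP => a; rewrite mxE; exact: (main _ a (ltnSn _)).
Qed.

Lemma Gpos (u : 'rV[R]_(N n)) : u != 0 -> 0 < (u *m Gtheta R n p *m u^T) 0 0.
Proof.
move=> nz; rewrite Gquad.
have hge : forall x : state n, true -> 0 <= p x * (\sum_a u 0 a * F x a) ^+ 2.
  by move=> x _; rewrite mulr_ge0 ?sqr_ge0 // ltW.
rewrite lt_def sumr_ge0 // andbT.
apply: contra nz => /eqP h; apply/eqP; apply: indep => x.
have := psumr_eq0P hge h (i:=x) isT; move/eqP; rewrite mulf_eq0 sqrf_eq0 => /orP [|/eqP //].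
by rewrite (gt_eqF (ppos x)).
Qed.
End Spec.

Theorem lemma1 (R : realFieldType) (n l : nat) (p : state n -> R) :
  (2 <= n)%N -> (1 <= l)%N -> (l <= n - 1)%N ->
  (forall x, 0 < p x) -> \sum_(x : state n) p x = 1 ->
  (forall i : 'I_#|Ieta n l|, 1 <= Amat R n p l i i) /\
  (forall j : 'I_#|Jtheta n l|, Bmat R n p l j j <= 1).
Proof.
move=> _ _ _ ppos psum.
have GS : (Gtheta R n p)^T = Gtheta R n p by apply: Gsym.
have GP : posdef R (Gtheta R n p) by move=> u nz; apply: Gpos.
split.
  move=> i; rewrite /Amat /Geta invmxK /principal.
  set M := mxsub _ _ (Gtheta R n p).
  have HM : M^T = M by apply/matrixP => a b; rewrite /M !mxE setUC mulrC.
  have PM : posdef R M by apply: posdef_sub => //; apply: enum_val_inj.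
  have := caseA i HM PM; have : M i i <= 1 by rewrite /M mxE Gdiag.
  lra.
move=> j; rewrite /Bmat /principal.
apply: le_trans (caseB j (@enum_val_inj _ _) GS GP) _; apply: Gdiag.
Qed.
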